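(* For any finite, simple, connected graph $G$ and any $n\ge 1$, $\gamma_P(G)\le\gamma_P(G\,\Box\,P_n)\le\gamma(G)$. In particular, $\gamma_P(G)\le\gamma_P(G\,\Box\,P_2)\le\min\{\gamma(G),Z(G)\}$, and if $\gamma_P(G)=\gamma(G)$ then $\gamma_P(G\,\Box\,P_n)=\gamma(G)$.
   Context: $P_n$ is the path of order $n$. The Cartesian product $G\,\Box\,H$ has vertex set $V(G)\times V(H)$, with $(g,h)$ adjacent to $(g',h')$ iff either $g=g'$ and $hh'\in E(H)$, or $h=h'$ and $gg'\in E(G)$. $\gamma(G)$ is the domination number. For $U\subseteq V$, $cl(U)$ is obtained by coloring $U$ black and repeatedly applying: if a black vertex has exactly one white neighbor, that neighbor becomes black. $U$ is a zero forcing set if $cl(U)=V$, and $Z(G)$ is the minimum size of a zero forcing set. $S$ is a power dominating set if $cl(N[S])=V$; $\gamma_P$ is the minimum size of a power dominating set. *)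

(* Defs.v *)
From mathcomp Require Import all_boot.
Set Implicit Arguments. Unset Strict Implicit. Unset Printing Implicit Defensive.

Definition simple_graph (T : finType) (e : rel T) :=
  symmetric e /\ irreflexive e.

Definition connected_graph (T : finType) (e : rel T) :=
  forall x y : T, connect e x y.

Definition closed_nbhd (T : finType) (e : rel T) (S : {set T}) : {set T} :=
  S :|: [set y | [exists x in S, e x y]].

Definition dominating (T : finType) (e : rel T) (S : {set T}) :=
  closed_nbhd e S == [set: T].

Definition force_step (T : finType) (e : rel T) (B : {set T}) : {set T} :=
  B :|: [set w | [exists v in B,
          [&& e v w, w \notin B &
              [forall u, (e v u && (u \notin B)) ==> (u == w)]]]].

(* cl(U): repeatedly apply the rule; the black set only grows, so it is
   stable after #|T| rounds. *)
Definition cl (T : finType) (e : rel T) (U : {set T}) : {set T} :=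
  iter #|T| (force_step e) U.

Definition zero_forcing (T : finType) (e : rel T) (U : {set T}) :=
  cl e U == [set: T].

Definition power_dominating (T : finType) (e : rel T) (S : {set T}) :=
  cl e (closed_nbhd e S) == [set: T].

(* Minimum size of a set satisfying P (the full vertex set always does
   for the three notions below, so #|T| is a harmless default). *)
Definition min_size (T : finType) (P : {set T} -> bool) : nat :=
  \big[minn/#|T|]_(S : {set T} | P S) #|S|.

Definition domination_number (T : finType) (e : rel T) : nat :=
  min_size (dominating e).
Definition zero_forcing_number (T : finType) (e : rel T) : nat :=
  min_size (zero_forcing e).
Definition power_domination_number (T : finType) (e : rel T) : nat :=
  min_size (power_dominating e).

Definition path_rel (n : nat) : rel 'I_n :=
  fun i j => (i.+1 == j :> nat) || (j.+1 == i :> nat).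

Definition cart_prod (T U : finType) (e : rel T) (f : rel U) : rel (T * U) :=
  fun x y => ((x.1 == y.1) && f x.2 y.2) || ((x.2 == y.2) && e x.1 y.1).

Definition box_path (T : finType) (e : rel T) (n : nat) : rel (T * 'I_n) :=
  cart_prod e (@path_rel n).
Arguments box_path {T} e n.

(* Main.v *)
Require Import Defs.
From mathcomp Require Import all_boot.
Set Implicit Arguments.
Lemma min_size_le (T : finType) (P : {set T} -> bool) S : P S -> min_size P <= #|S|.
Proof.
move=> PS; rewrite /min_size.
have : S \in index_enum {set T} by rewrite mem_index_enum.
elim: (index_enum _) => [|a r IH] //=.
rewrite in_cons big_cons => /orP [/eqP <-|Hr].
  by rewrite PS geq_minl.
case: (P a); last exact: IH.
by rewrite geq_min IH ?orbT.
Qed.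
Lemma min_size_wit (T : finType) (P : {set T} -> bool) : P setT -> exists S, P S /\ min_size P = #|S|.
Proof.
move=> PT; rewrite /min_size.
apply: (big_ind (fun m => exists S, P S /\ m = #|S|)).
- by exists setT; rewrite cardsT.
- move=> a b [A [PA ->]] [B [PB ->]]; case: (leqP #|A| #|B|) => H.
  + by exists A; split => //; apply/minn_idPl.
  + by exists B; split => //; apply/minn_idPr; apply: ltnW.
- by move=> S PS; exists S.
Qed.
Section G.
Variables (T : finType) (e : rel T).
Lemma fs_ext (B : {set T}) : B \subset force_step e B.
Proof. exact: subsetUl. Qed.
Lemma fs_mono (A B : {set T}) : A \subset B -> force_step e A \subset force_step e B.
Proof.
move=> AB; apply/subsetP => w; rewrite !inE => /orP [/(subsetP AB) -> //|].
case/existsP => v /and4P [vA evw wA /forallP H].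
case wB: (w \in B) => //=.
apply/existsP; exists v; rewrite (subsetP AB) //= evw /=.
apply/forallP => u; apply/implyP => /andP [evu uB]; apply: (implyP (H u)).
by rewrite evu /=; apply: contra uB; apply: (subsetP AB).
Qed.
Lemma iter_ext k (U : {set T}) : U \subset iter k (force_step e) U.
Proof. elim: k => [|k IH] //=; exact: subset_trans IH (fs_ext _). Qed.
Lemma cl_ext (U : {set T}) : U \subset cl e U.
Proof. exact: iter_ext. Qed.
Lemma cl_fix (U : {set T}) : force_step e (cl e U) = cl e U.
Proof.
rewrite /cl; set f := force_step e.
have H : forall k, f (iter k f U) != iter k f U -> k <= #|iter k f U|.
  elim=> [|k IH] //= Hne.
  have Hk : f (iter k f U) != iter k f U.
    by apply: contra Hne => /eqP E; rewrite E E.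
  have Hp : iter k f U \proper f (iter k f U).
    by rewrite properEneq eq_sym Hk fs_ext.
  exact: leq_ltn_trans (IH Hk) (proper_card Hp).
apply/eqP; apply: contraT => Hne.
have Hp : iter #|T| f U \proper f (iter #|T| f U).
  by rewrite properEneq eq_sym Hne fs_ext.
have := leq_ltn_trans (H _ Hne) (proper_card Hp).
by rewrite ltnNge max_card.
Qed.
Lemma cl_min (U C : {set T}) : U \subset C -> force_step e C \subset C -> cl e U \subset C.
Proof.
move=> UC FC; rewrite /cl; elim: #|T| => [|k IH] //=.
exact: subset_trans (fs_mono IH) FC.
Qed.
End G.
Section H.
Variables (T : finType) (e : rel T).
Lemma lower n (S : {set T * 'I_n}) : 0 < n ->
  power_dominating (box_path e n) S -> power_dominating e [set x.1 | x in S].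
Proof.
move=> n0 PD.
set S' := [set x.1 | x in S]; set C := cl e (closed_nbhd e S').
have FC := @cl_fix _ e (closed_nbhd e S').
have NC : closed_nbhd e S' \subset C := @cl_ext _ e _.
have base : forall y, y \in closed_nbhd (box_path e n) S -> y.1 \in closed_nbhd e S'.
  move=> y; rewrite /closed_nbhd in_setU inE => /orP [yS | /existsP [x /andP [xS]]].
    by rewrite in_setU imset_f.
  rewrite /box_path /cart_prod => /orP [/andP [/eqP E _] | /andP [_ Exy]].
    by rewrite in_setU -E imset_f.
  rewrite in_setU inE; apply/orP; right; apply/existsP; exists x.1.
  by rewrite Exy andbT imset_f.
have step : forall k y, y \in iter k (force_step (box_path e n)) (closed_nbhd (box_path e n) S) -> y.1 \in C.
  elim=> [|k IH] y /=.
    by move=> /base; apply: (subsetP NC).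
  rewrite {1}/force_step in_setU => /orP [/IH // | ].
  rewrite inE => /existsP [x /and4P [xB exy yB /forallP H]].
  rewrite /C -FC -/C in_setU.
  case: (orP exy) => [/andP [/eqP E _] | /andP [/eqP E2 e1]].
    by rewrite -E IH.
  case yC: (y.1 \in C) => //=.
  rewrite inE; apply/existsP; exists x.1; rewrite IH //= e1 yC /=.
  apply/forallP => w; apply/implyP => /andP [exw wC].
  have := H (w, x.2).
  rewrite /box_path /cart_prod /= eqxx exw orbT /=.
  have -> : (w, x.2) \notin iter k (force_step (box_path e n)) (closed_nbhd (box_path e n) S).
    by apply: contra wC => /IH.
  by move=> /eqP E; rewrite -E.
rewrite /power_dominating -/C eqEsubset subsetT /=.
apply/subsetP => v _.
apply: (step #|{: T * 'I_n}| (v, Ordinal n0)).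
by rewrite -/(cl _ _) (eqP PD) inE.
Qed.
Lemma upper n (D : {set T}) (n0 : 0 < n) : dominating e D ->
  power_dominating (box_path e n) [set (v, Ordinal n0) | v in D].
Proof.
move=> HD.
set i0 := Ordinal n0; set S := [set (v, i0) | v in D].
set F := cl (box_path e n) (closed_nbhd (box_path e n) S).
have FF := @cl_fix _ (box_path e n) (closed_nbhd (box_path e n) S).
have NF := @cl_ext _ (box_path e n) (closed_nbhd (box_path e n) S).
have L0 : forall v, (v, i0) \in F.
  move=> v; apply: (subsetP NF); rewrite /closed_nbhd in_setU.
  have : v \in closed_nbhd e D by rewrite (eqP HD) inE.
  rewrite in_setU inE => /orP [vD | /existsP [u /andP [uD euv]]].
    by rewrite imset_f.
  apply/orP; right; rewrite inE; apply/existsP; exists (u, i0).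
  by rewrite imset_f //= /box_path /cart_prod /= euv orbT.
have L : forall i v (j : 'I_n), j <= i -> (v, j) \in F.
  elim=> [|i IH] v j.
    rewrite leqn0 => /eqP j0.
    have -> : j = i0 by apply: val_inj.
    exact: L0.
  rewrite leq_eqVlt ltnS => /orP [/eqP ji | /IH //].
  have ki : i < n by apply: ltnW; rewrite -ji.
  set k := Ordinal ki.
  rewrite /F -FF -/F in_setU.
  case jF: ((v, j) \in F) => //=.
  rewrite inE; apply/existsP; exists (v, k).
  rewrite IH //= /box_path /cart_prod /= eqxx /path_rel /= ji eqxx /=.
  rewrite jF /=.
  apply/forallP => [[u1 u2]] /=; apply/implyP => /andP [H uF].
  case/orP: H => /andP [/eqP E1 H2].
    case/orP: H2 => /eqP H2.
      by apply/eqP; rewrite -E1; congr pair; apply: val_inj; rewrite /= -H2 ji.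
    by rewrite -E1 IH // in uF; rewrite -ltnS H2.
  by rewrite -E1 IH // in uF.
rewrite /power_dominating -/F eqEsubset subsetT /=.
apply/subsetP => -[v j] _; exact: (L j v j (leqnn _)).
Qed.
Lemma zf2 (W : {set T}) : zero_forcing e W ->
  power_dominating (box_path e 2) [set (v, ord0) | v in W].
Proof.
move=> ZF.
set S := [set (v, ord0) | v in W].
set F := cl (box_path e 2) (closed_nbhd (box_path e 2) S).
have FF := @cl_fix _ (box_path e 2) (closed_nbhd (box_path e 2) S).
have NF := @cl_ext _ (box_path e 2) (closed_nbhd (box_path e 2) S).
set C := [set v | [forall b : 'I_2, (v, b) \in F]].
have WC : W \subset C.
  apply/subsetP => w wW; rewrite inE; apply/forallP => b; apply: (subsetP NF).
  rewrite /closed_nbhd in_setU; case: b => [[|[|b]] Hb] //.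
    have -> : Ordinal Hb = ord0 by apply: val_inj.
    by rewrite imset_f.
  apply/orP; right; rewrite inE; apply/existsP; exists (w, ord0).
  by rewrite imset_f //= /box_path /cart_prod /= eqxx.
have FCC : force_step e C \subset C.
  apply/subsetP => v; rewrite in_setU => /orP [// | ].
  rewrite inE => /existsP [u /and4P [uC euv vC /forallP H]].
  move: uC; rewrite inE => /forallP uC.
  rewrite inE; apply/forallP => b; rewrite /F -FF -/F in_setU.
  case vbF: ((v, b) \in F) => //=.
  rewrite inE; apply/existsP; exists (u, b).
  rewrite uC /box_path /cart_prod /= eqxx euv orbT vbF /=.
  apply/forallP => [[y1 y2]] /=; apply/implyP => /andP [Hy yF].
  case/orP: Hy => /andP [/eqP E1 Hy2].
    by rewrite -E1 uC in yF.
  case y1C: (y1 \in C).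
    by move: y1C; rewrite inE => /forallP y1C; rewrite -E1 y1C in yF.
  move/implyP: (H y1); rewrite Hy2 y1C => /(_ isT) /eqP ->.
  by rewrite E1.
have CT := @cl_min _ e _ _ WC FCC.
rewrite /power_dominating -/F eqEsubset subsetT /=.
apply/subsetP => -[v b] _.
have : v \in C by apply: (subsetP CT); rewrite (eqP ZF) inE.
by rewrite inE => /forallP; apply.
Qed.
End H.

Lemma dom_T (T : finType) (e : rel T) : dominating e setT.
Proof. by rewrite /dominating /closed_nbhd setTU. Qed.
Lemma zf_T (T : finType) (e : rel T) : zero_forcing e setT.
Proof. by rewrite /zero_forcing eqEsubset subsetT cl_ext. Qed.
Lemma pd_T (T : finType) (e : rel T) : power_dominating e setT.
Proof.
rewrite /power_dominating eqEsubset subsetT /=.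
by apply: subset_trans (cl_ext _ _); rewrite /closed_nbhd setTU.
Qed.

Lemma part1 (T : finType) (e : rel T) n : 1 <= n ->
  power_domination_number e <= power_domination_number (box_path e n)
     <= domination_number e.
Proof.
move=> n0; rewrite /power_domination_number /domination_number; apply/andP; split.
  have [S [PS ->]] := min_size_wit _ (@pd_T _ (box_path e n)).
  apply: leq_trans (min_size_le _ _ (lower e _ n0 PS)) _.
  exact: leq_imset_card.
have [D [HD ->]] := min_size_wit _ (@dom_T _ e).
apply: leq_trans (min_size_le _ _ (upper e _ _ n0 HD)) _.
exact: leq_imset_card.
Qed.

Theorem mainTheorem11 (T : finType) (e : rel T) :
  simple_graph e -> connected_graph e -> 0 < #|T| ->
  (forall n : nat, 1 <= n ->
     power_domination_number e <= power_domination_number (box_path e n)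
     <= domination_number e)
  /\ (power_domination_number e <= power_domination_number (box_path e 2)
      <= minn (domination_number e) (zero_forcing_number e))
  /\ (power_domination_number e = domination_number e ->
      forall n : nat, 1 <= n ->
        power_domination_number (box_path e n) = domination_number e).
Proof.
move=> _ _ _; split; first exact: part1.
split.
  have /andP [H1 H2] := @part1 _ e _ (isT : 1 <= 2).
  rewrite H1 /= leq_min H2 /= /zero_forcing_number /power_domination_number.
  have [W [HW ->]] := min_size_wit _ (@zf_T _ e).
  apply: leq_trans (leq_imset_card (fun v => (v, ord0 : 'I_2)) W); apply: min_size_le; exact: zf2.
move=> E n n0; have /andP [H1 H2] := @part1 _ e _ n0.
by apply/eqP; rewrite eqn_leq H2 -E H1.
Qed.
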